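(* (1) For every $\phi\in\mathcal{L}_{\Box\!\!\rightarrow}$, if $\phi\in\mathsf{N4CK}$, then $\phi\in\mathsf{CK}$. (2) The classical system $\mathbb{CK}$ (axiomatizing $\mathsf{CK}$) and the system $\mathbb{N}4\mathbb{CK}$ extended with the axiom schemes $\phi\to(\sim\phi\to\psi)$ and $\phi\vee\sim\phi$ generate the same logic over $\mathcal{L}_{\Box\!\!\rightarrow}$ when both are closed under the operation $^\iota$.
   Context: $\mathcal{L}_{\Box\!\!\rightarrow}$ is built from propositional variables with $\wedge,\vee,\to$, negation $\sim$, and a binary would-conditional $\Box\!\!\rightarrow$; $\phi\Diamond\!\!\rightarrow\psi$ abbreviates $\sim(\phi\Box\!\!\rightarrow\sim\psi)$. Abbreviations: $\leftrightarrow$ is mutual $\to$; $\phi\Rightarrow\psi:=(\phi\to\psi)\wedge(\sim\psi\to\sim\phi)$; $\phi\Leftrightarrow\psi:=(\phi\Rightarrow\psi)\wedge(\psi\Rightarrow\phi)$. Consider the axioms (A1) $((\phi\Box\!\!\rightarrow\psi)\wedge(\phi\Box\!\!\rightarrow\chi))\Leftrightarrow(\phi\Box\!\!\rightarrow(\psi\wedge\chi))$; (A2) $(\sim(\phi\Box\!\!\rightarrow\psi)\wedge(\phi\Box\!\!\rightarrow\chi))\to\sim(\phi\Box\!\!\rightarrow(\psi\vee\sim\chi))$; (A3) $((\phi\Diamond\!\!\rightarrow\psi)\to(\phi\Box\!\!\rightarrow\chi))\to(\phi\Box\!\!\rightarrow(\psi\to\chi))$; (A4) $\phi\Box\!\!\rightarrow(\psi\to\psi)$;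 and rules (RA) from $\phi\Leftrightarrow\psi$ infer $(\phi\Box\!\!\rightarrow\chi)\Leftrightarrow(\psi\Box\!\!\rightarrow\chi)$; (RC1) from $\phi\leftrightarrow\psi$ infer $(\chi\Box\!\!\rightarrow\phi)\leftrightarrow(\chi\Box\!\!\rightarrow\psi)$; (RC2) from $\sim\phi\leftrightarrow\sim\psi$ infer $\sim(\chi\Box\!\!\rightarrow\phi)\leftrightarrow\sim(\chi\Box\!\!\rightarrow\psi)$. $\mathbb{N}4\mathbb{CK}$ = modus ponens + positive intuitionistic schemes + $\sim\sim\phi\leftrightarrow\phi$, $\sim(\phi\wedge\psi)\leftrightarrow(\sim\phi\vee\sim\psi)$, $\sim(\phi\vee\psi)\leftrightarrow(\sim\phi\wedge\sim\psi)$, $\sim(\phi\to\psi)\leftrightarrow(\phi\wedge\sim\psi)$ + (A1)–(A4) + (RA),(RC1),(RC2); it is sound and complete for $\mathsf{N4CK}$, the paraconsistent Nelsonian conditional logic. $\mathsf{CK}$ is Chellas' basic classical conditional logic, axiomatized by $\mathbb{CK}$ := classical propositional logic (with $\sim$ as classical negation) + (A1), (A4), (RA), (RC1). For a system $\mathbb{S}$, $\Gamma\vdash_\mathbb{S}\Delta$ means some nonempty finite disjunction of members of $\Delta$ is derivable from $\Gamma$ and theorems by modus ponens, and $\mathbb{S}^\iota[\mathcal{L}_{\Box\!\!\rightarrow}]$ is the resulting relation extended by all pairs $(\Gamma,\emptyset)$ such that $\Gamma\vdash_\mathbb{S}p_1\wedge\sim p_1$. *)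

(* Defs.v *)
From Stdlib Require Import List.
Import ListNotations.

Inductive form : Type :=
| Var : nat -> form
| And : form -> form -> form
| Or : form -> form -> form
| Imp : form -> form -> form
| Neg : form -> form
| Cond : form -> form -> form.

Definition Iff (a b : form) : form := And (Imp a b) (Imp b a).
Definition SImp (a b : form) : form := And (Imp a b) (Imp (Neg b) (Neg a)).
Definition SIff (a b : form) : form := And (SImp a b) (SImp b a).
Definition MCond (a b : form) : form := Neg (Cond a (Neg b)).

Inductive PosInt : form -> Prop :=
| PI1 a b : PosInt (Imp a (Imp b a))
| PI2 a b c : PosInt (Imp (Imp a (Imp b c)) (Imp (Imp a b) (Imp a c)))
| PI3 a b : PosInt (Imp (And a b) a)
| PI4 a b : PosInt (Imp (And a b) b)
| PI5 a b : PosInt (Imp a (Imp b (And a b)))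
| PI6 a b : PosInt (Imp a (Or a b))
| PI7 a b : PosInt (Imp b (Or a b))
| PI8 a b c : PosInt (Imp (Imp a c) (Imp (Imp b c) (Imp (Or a b) c))).

Inductive NegAx : form -> Prop :=
| NA1 a : NegAx (Iff (Neg (Neg a)) a)
| NA2 a b : NegAx (Iff (Neg (And a b)) (Or (Neg a) (Neg b)))
| NA3 a b : NegAx (Iff (Neg (Or a b)) (And (Neg a) (Neg b)))
| NA4 a b : NegAx (Iff (Neg (Imp a b)) (And a (Neg b))).

(** Classical propositional logic: all instances of classical tautologies,
    treating variables and conditionals as atoms and ~ as classical negation. *)
Fixpoint ceval (v : form -> bool) (f : form) : bool :=
  match f with
  | Var _ => v f
  | Cond _ _ => v f
  | And a b => andb (ceval v a) (ceval v b)
  | Or a b => orb (ceval v a) (ceval v b)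
  | Imp a b => implb (ceval v a) (ceval v b)
  | Neg a => negb (ceval v a)
  end.
Definition Taut (f : form) : Prop := forall v, ceval v f = true.

Definition A1 a b c : form :=
  SIff (And (Cond a b) (Cond a c)) (Cond a (And b c)).
Definition A2 a b c : form :=
  Imp (And (Neg (Cond a b)) (Cond a c)) (Neg (Cond a (Or b (Neg c)))).
Definition A3 a b c : form :=
  Imp (Imp (MCond a b) (Cond a c)) (Cond a (Imp b c)).
Definition A4 a b : form := Cond a (Imp b b).

Inductive ThmN4CK (ext : bool) : form -> Prop :=
| N_pos f : PosInt f -> ThmN4CK ext f
| N_neg f : NegAx f -> ThmN4CK ext f
| N_A1 a b c : ThmN4CK ext (A1 a b c)
| N_A2 a b c : ThmN4CK ext (A2 a b c)
| N_A3 a b c : ThmN4CK ext (A3 a b c)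
| N_A4 a b : ThmN4CK ext (A4 a b)
| N_efq a b : ext = true -> ThmN4CK ext (Imp a (Imp (Neg a) b))
| N_lem a : ext = true -> ThmN4CK ext (Or a (Neg a))
| N_MP a b : ThmN4CK ext (Imp a b) -> ThmN4CK ext a -> ThmN4CK ext b
| N_RA a b c : ThmN4CK ext (SIff a b) ->
    ThmN4CK ext (SIff (Cond a c) (Cond b c))
| N_RC1 a b c : ThmN4CK ext (Iff a b) ->
    ThmN4CK ext (Iff (Cond c a) (Cond c b))
| N_RC2 a b c : ThmN4CK ext (Iff (Neg a) (Neg b)) ->
    ThmN4CK ext (Iff (Neg (Cond c a)) (Neg (Cond c b))).

Inductive ThmCK : form -> Prop :=
| C_taut f : Taut f -> ThmCK f
| C_A1 a b c : ThmCK (A1 a b c)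
| C_A4 a b : ThmCK (A4 a b)
| C_MP a b : ThmCK (Imp a b) -> ThmCK a -> ThmCK b
| C_RA a b c : ThmCK (SIff a b) -> ThmCK (SIff (Cond a c) (Cond b c))
| C_RC1 a b c : ThmCK (Iff a b) -> ThmCK (Iff (Cond c a) (Cond c b)).

Definition N4CK_sys : form -> Prop := ThmN4CK false.
Definition N4CKext_sys : form -> Prop := ThmN4CK true.
Definition CK_sys : form -> Prop := ThmCK.

Inductive Deriv (Thm : form -> Prop) (G : form -> Prop) : form -> Prop :=
| D_hyp f : G f -> Deriv Thm G f
| D_thm f : Thm f -> Deriv Thm G f
| D_MP a b : Deriv Thm G (Imp a b) -> Deriv Thm G a -> Deriv Thm G b.

Fixpoint bigOr (d : form) (l : list form) : form :=
  match l with
  | [] => d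
  | e :: l' => Or d (bigOr e l')
  end.

(** Gamma |-_S Delta : some nonempty finite disjunction of members of Delta
    is derivable from Gamma. *)
Definition Cons (Thm : form -> Prop) (G D : form -> Prop) : Prop :=
  exists (d : form) (l : list form),
    D d /\ (forall e, In e l -> D e) /\ Deriv Thm G (bigOr d l).

Definition p1 : form := Var 1.
Definition ConsIota (Thm : form -> Prop) (G D : form -> Prop) : Prop :=
  Cons Thm G D \/
  ((forall x, ~ D x) /\ Deriv Thm G (And p1 (Neg p1))).

Definition InLogic (Thm : form -> Prop) (f : form) : Prop :=
  Deriv Thm (fun _ => False) f.

(* Main.v *)
Require Import Defs.
From Stdlib Require Import List.
Import ListNotations.

Ltac taut := cbv [Taut Iff SIff MCond A1 A2 A3 A4]; let v := fresh "v" in intro v; simpl;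
  repeat match goal with
  | |- context [ceval v ?x] => destruct (ceval v x)
  | |- context [v ?x] => destruct (v x)
  end; reflexivity.

Lemma deriv_mono (T1 T2 : form -> Prop) (G1 G2 : form -> Prop) f :
  (forall x, T1 x -> T2 x) -> (forall x, G1 x -> G2 x) ->
  Deriv T1 G1 f -> Deriv T2 G2 f.
Proof.
  intros HT HG D; induction D.
  - apply D_hyp; auto.
  - apply D_thm; auto.
  - eapply D_MP; eauto.
Qed.

Lemma ck_closed f : Deriv ThmCK (fun _ => False) f -> ThmCK f.
Proof. intro D; induction D; [contradiction| assumption | eapply C_MP; eauto]. Qed.

Lemma n_closed e f : Deriv (ThmN4CK e) (fun _ => False) f -> ThmN4CK e f.
Proof. intro D; induction D; [contradiction| assumption | eapply N_MP; eauto]. Qed.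

Lemma ck1 h g : ThmCK h -> Taut (Imp h g) -> ThmCK g.
Proof. intros H T; eapply C_MP; [apply C_taut; exact T| exact H]. Qed.
Lemma ck2 h1 h2 g : ThmCK h1 -> ThmCK h2 -> Taut (Imp h1 (Imp h2 g)) -> ThmCK g.
Proof. intros H1 H2 T; eapply C_MP; [eapply C_MP; [apply C_taut; exact T| exact H1]| exact H2]. Qed.
Lemma ck3 h1 h2 h3 g : ThmCK h1 -> ThmCK h2 -> ThmCK h3 ->
  Taut (Imp h1 (Imp h2 (Imp h3 g))) -> ThmCK g.
Proof. intros H1 H2 H3 T; eapply C_MP; [eapply ck2; [exact H1|exact H2|exact T]| exact H3]. Qed.

Lemma ck_mono a x y : ThmCK (Imp x y) -> ThmCK (Imp (Cond a x) (Cond a y)).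
Proof.
  intro H.
  assert (H1 : ThmCK (Iff x (And x y))) by (eapply ck1; [exact H| taut]).
  pose proof (C_RC1 _ _ a H1) as H2.
  pose proof (C_A1 a x y) as H3.
  eapply ck2; [exact H2 | exact H3 | taut].
Qed.

Lemma ck_A2 a b c : ThmCK (A2 a b c).
Proof.
  pose proof (C_A1 a c (Or b (Neg c))) as H1.
  assert (H2 : ThmCK (Iff (Cond a (And c (Or b (Neg c)))) (Cond a (And b c)))).
  { apply C_RC1. apply C_taut. taut. }
  pose proof (C_A1 a b c) as H3.
  eapply ck3; [exact H1|exact H2|exact H3|taut].
Qed.

Lemma ck_A3 a b c : ThmCK (A3 a b c).
Proof.
  assert (H1 : ThmCK (Imp (Cond a (Neg b)) (Cond a (Imp b c)))).
  { apply ck_mono. apply C_taut. taut. }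
  assert (H2 : ThmCK (Imp (Cond a c) (Cond a (Imp b c)))).
  { apply ck_mono. apply C_taut. taut. }
  eapply ck2; [exact H1|exact H2|taut].
Qed.

Lemma n_to_ck e f : ThmN4CK e f -> ThmCK f.
Proof.
  intro H; induction H.
  - apply C_taut; destruct H; taut.
  - apply C_taut; destruct H; taut.
  - apply C_A1.
  - apply ck_A2.
  - apply ck_A3.
  - apply C_A4.
  - apply C_taut; taut.
  - apply C_taut; taut.
  - eapply C_MP; eauto.
  - apply C_RA; auto.
  - apply C_RC1; auto.
  - assert (H1 : ThmCK (Iff a b)) by (eapply ck1; [exact IHThmN4CK| taut]).
    pose proof (C_RC1 _ _ c H1) as H2.
    eapply ck1; [exact H2| taut].
Qed.

Definition T := ThmN4CK true.

Lemma dthm G f : T f -> Deriv T G f.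
Proof. apply D_thm. Qed.

Lemma mp G a b : Deriv T G (Imp a b) -> Deriv T G a -> Deriv T G b.
Proof. apply D_MP. Qed.

Lemma pi G f : PosInt f -> Deriv T G f.
Proof. intro; apply dthm; apply N_pos; auto. Qed.
Lemma na G f : NegAx f -> Deriv T G f.
Proof. intro; apply dthm; apply N_neg; auto. Qed.

Lemma iff2 G x y : Deriv T G (Iff x y) -> Deriv T G (Imp y x).
Proof. intro H. eapply mp; [apply pi, PI4 | exact H]. Qed.

Lemma idI G a : Deriv T G (Imp a a).
Proof.
  eapply mp; [eapply mp; [apply pi, (PI2 a (Imp a a) a)| apply pi, PI1]| apply pi, (PI1 a a)].
Qed.

Lemma deduction G a b : Deriv T (fun x => x = a \/ G x) b -> Deriv T G (Imp a b).
Proof.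
  intro D; induction D.
  - destruct H as [->|H].
    + apply idI.
    + eapply mp; [apply pi, PI1| apply D_hyp; auto].
  - eapply mp; [apply pi, PI1| apply D_thm; auto].
  - eapply mp; [eapply mp; [apply pi, PI2| exact IHD1]| exact IHD2].
Qed.

Fixpoint atoms (f : form) : list form :=
  match f with
  | Var _ => [f]
  | Cond _ _ => [f]
  | And a b | Or a b | Imp a b => atoms a ++ atoms b
  | Neg a => atoms a
  end.

Definition lit (v : form -> bool) p := if v p then p else Neg p.
Definition Hyps v K := fun x => exists q, In q K /\ x = lit v q.

Lemma kalmar v f K : (forall q, In q (atoms f) -> In q K) ->
  Deriv T (Hyps v K) (if ceval v f then f else Neg f).
Proof.
  revert K; induction f; intros K HK; simpl in *.
  - apply D_hyp. exists (Var n); split; [apply HK; auto| reflexivity].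
  - assert (A := IHf1 K (fun q h => HK q (in_or_app _ _ _ (or_introl h)))).
    assert (B := IHf2 K (fun q h => HK q (in_or_app _ _ _ (or_intror h)))).
    destruct (ceval v f1), (ceval v f2); simpl.
    + eapply mp; [eapply mp; [apply pi, PI5|exact A]| exact B].
    + eapply mp; [apply iff2; apply na, NA2|]. eapply mp; [apply pi, PI7| exact B].
    + eapply mp; [apply iff2; apply na, NA2|]. eapply mp; [apply pi, PI6| exact A].
    + eapply mp; [apply iff2; apply na, NA2|]. eapply mp; [apply pi, PI6| exact A].
  - assert (A := IHf1 K (fun q h => HK q (in_or_app _ _ _ (or_introl h)))).
    assert (B := IHf2 K (fun q h => HK q (in_or_app _ _ _ (or_intror h)))).
    destruct (ceval v f1), (ceval v f2); simpl.
    + eapply mp; [apply pi, PI6| exact A].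
    + eapply mp; [apply pi, PI6| exact A].
    + eapply mp; [apply pi, PI7| exact B].
    + eapply mp; [apply iff2; apply na, NA3|].
      eapply mp; [eapply mp; [apply pi, PI5|exact A]| exact B].
  - assert (A := IHf1 K (fun q h => HK q (in_or_app _ _ _ (or_introl h)))).
    assert (B := IHf2 K (fun q h => HK q (in_or_app _ _ _ (or_intror h)))).
    destruct (ceval v f1), (ceval v f2); simpl.
    + eapply mp; [apply pi, PI1| exact B].
    + eapply mp; [apply iff2; apply na, NA4|].
      eapply mp; [eapply mp; [apply pi, PI5|exact A]| exact B].
    + eapply mp; [apply pi, PI1| exact B].
    + eapply mp; [eapply mp; [apply pi, (PI2 f1 (Neg f1) f2)|]|].
      * apply dthm; apply N_efq; reflexivity.
      * eapply mp; [apply pi, PI1| exact A].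
  - assert (A := IHf K HK).
    destruct (ceval v f); simpl.
    + eapply mp; [apply iff2; apply na, NA1| exact A].
    + exact A.
  - apply D_hyp. exists (Cond f1 f2); split; [apply HK; auto| reflexivity].
Qed.

Definition form_eq_dec : forall x y : form, {x = y} + {x <> y}.
Proof. decide equality; apply PeanoNat.Nat.eq_dec. Defined.

Definition upd (v : form -> bool) p (b : bool) :=
  fun x => if form_eq_dec x p then b else v x.

Lemma hyps_upd v p b K x :
  Hyps (upd v p b) (p :: K) x -> x = (if b then p else Neg p) \/ Hyps v K x.
Proof.
  intros [q [[<-|Hq] ->]]; unfold lit, upd.
  - left. destruct (form_eq_dec p p); [reflexivity| congruence].
  - destruct (form_eq_dec q p) as [->|n].
    + left; reflexivity.
    + right. exists q; split; auto.
Qed.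

Lemma elim f : forall K, (forall v, Deriv T (Hyps v K) f) -> Deriv T (fun _ => False) f.
Proof.
  induction K as [|p K IH]; intro H.
  - eapply deriv_mono; [| |apply (H (fun _ => true))]; auto.
    intros x [q [[] _]].
  - apply IH. intro v.
    assert (H1 : Deriv T (Hyps v K) (Imp p f)).
    { apply deduction. eapply deriv_mono; [| |apply (H (upd v p true))]; auto.
      intros x Hx; apply (hyps_upd v p true K x Hx). }
    assert (H0 : Deriv T (Hyps v K) (Imp (Neg p) f)).
    { apply deduction. eapply deriv_mono; [| |apply (H (upd v p false))]; auto.
      intros x Hx; apply (hyps_upd v p false K x Hx). }
    eapply mp; [eapply mp; [eapply mp; [apply pi, PI8| exact H1]| exact H0]|].
    apply dthm; apply N_lem; reflexivity.
Qed.

Lemma taut_T f : Taut f -> T f.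
Proof.
  intro Ht. apply n_closed. apply (elim f (atoms f)).
  intro v. pose proof (kalmar v f (atoms f) (fun q h => h)) as K.
  rewrite (Ht v) in K. exact K.
Qed.

Lemma ck_to_n f : ThmCK f -> T f.
Proof.
  intro H; induction H.
  - apply taut_T; auto.
  - apply N_A1.
  - apply N_A4.
  - eapply N_MP; eauto.
  - apply N_RA; auto.
  - apply N_RC1; auto.
Qed.

Theorem proposition8 :
  (forall phi : form, InLogic N4CK_sys phi -> InLogic CK_sys phi) /\
  (forall G D : form -> Prop,
      ConsIota CK_sys G D <-> ConsIota N4CKext_sys G D).
Proof.
  split.
  - intros phi H. eapply deriv_mono; [| |exact H]; auto. apply n_to_ck.
  - intros G D.
    assert (F1 : forall f, Deriv CK_sys G f -> Deriv N4CKext_sys G f)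
      by (intros f; apply deriv_mono; auto; apply ck_to_n).
    assert (F2 : forall f, Deriv N4CKext_sys G f -> Deriv CK_sys G f)
      by (intros f; apply deriv_mono; auto; apply n_to_ck).
    unfold ConsIota, Cons; split;
      (intros [[d [l [Hd [Hl Hp]]]]|[Hn Hp]];
       [left; exists d, l; auto| right; auto]).
Qed.
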